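(* Let $(u,m)$ be a pair of smooth (classical) solutions to the system \[ \begin{cases} u_t + \frac{\sigma^2}{2} u_{xx} - ru + G(u_x,m)^2 = 0, & 0<t<T,\ 0<x<L,\\ m_t - \frac{\sigma^2}{2} m_{xx} - \{G(u_x,m)m\}_x = 0, & 0<t<T,\ 0<x<L,\\ m(0,x)=m_0(x),\quad u(T,x)=u_T(x), & 0\le x\le L,\\ u_x(t,0)=u_x(t,L)=0, & 0\le t\le T,\\ \frac{\sigma^2}{2} m_x(t,x) + G(u_x,m)m(t,x) = 0, & 0\le t\le T,\ x\in\{0,L\}, \end{cases} \] where $G(u_x,m)(t,x) := \frac12\left(b + c\int_0^L u_x(t,y)m(t,y)\,dy - u_x(t,x)\right)$. Then for all $t\in[0,T]$, $m(t,\cdot)$ is a probability density on $[0,L]$, and $u(t,x)\ge 0$ for all $t\in[0,T]$, $x\in[0,L]$. Moreover, there is a constant $C>0$ depending only on the data such that \[ \int_0^T\int_0^L m\,u_x^2\,dx\,dt \le C. \]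
   Context: Standing setting: $L,T,\sigma,r>0$ are constants, $\epsilon>0$, and $b=\frac{2}{2+\epsilon}$, $c=\frac{\epsilon}{2+\epsilon}$. The data satisfy: $u_T,m_0\in C^{2+\gamma}([0,L])$ for some $\gamma>0$; $u_T'(0)=u_T'(L)=0$ and $m_0(0)=m_0'(0)=m_0(L)=m_0'(L)=0$; $m_0$ is a probability density on $[0,L]$; $u_T\ge 0$. ''Depending only on the data'' means depending only on $u_T,m_0,L,T,\sigma,r,\epsilon$. *)

(* Defs.v *)
From Stdlib Require Import Reals.
From Coquelicot Require Import Coquelicot.
Open Scope R_scope.

Definition in_cc (a b x : R) : Prop := a <= x <= b.
Definition rect (T L : R) (p : R * R) : Prop := in_cc 0 T (fst p) /\ in_cc 0 L (snd p).

Definition pt (w : R -> R -> R) (t x : R) : R := Derive (fun s => w s x) t.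
Definition px (w : R -> R -> R) (t x : R) : R := Derive (fun y => w t y) x.
Definition pxx (w : R -> R -> R) (t x : R) : R := Derive (fun y => px w t y) x.

Definition cont_on_rect (T L : R) (f : R -> R -> R) : Prop :=
  forall p : R * R, rect T L p ->
    filterlim (fun q : R * R => f (fst q) (snd q)) (within (rect T L) (locally p))
              (locally (f (fst p) (snd p))).

Definition C12_rect (T L : R) (w : R -> R -> R) : Prop :=
  (forall t x, rect T L (t, x) ->
     ex_derive (fun s => w s x) t /\
     ex_derive (fun y => w t y) x /\
     ex_derive (fun y => px w t y) x) /\
  cont_on_rect T L w /\ cont_on_rect T L (pt w) /\
  cont_on_rect T L (px w) /\ cont_on_rect T L (pxx w).

Definition C2gamma (L gamma : R) (f : R -> R) : Prop :=
  (forall x, in_cc 0 L x -> ex_derive f x /\ ex_derive (Derive f) x) /\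
  exists K : R, forall x y, in_cc 0 L x -> in_cc 0 L y ->
    Rabs (Derive_n f 2 x - Derive_n f 2 y) <= K * Rpower (Rabs (x - y)) gamma.

Definition prob_density (L : R) (f : R -> R) : Prop :=
  (forall x, in_cc 0 L x -> 0 <= f x) /\ RInt f 0 L = 1.

Definition b_of (eps : R) : R := 2 / (2 + eps).
Definition c_of (eps : R) : R := eps / (2 + eps).
Definition Gc (eps L : R) (u m : R -> R -> R) (t x : R) : R :=
  / 2 * (b_of eps + c_of eps * RInt (fun y => px u t y * m t y) 0 L - px u t x).

Definition mfg_solution (L T sigma r eps : R) (uT m0 : R -> R) (u m : R -> R -> R) : Prop :=
  C12_rect T L u /\ C12_rect T L m /\
  (forall t x, 0 < t < T -> 0 < x < L ->
     pt u t x + sigma ^ 2 / 2 * pxx u t x - r * u t x + (Gc eps L u m t x) ^ 2 = 0) /\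
  (forall t x, 0 < t < T -> 0 < x < L ->
     pt m t x - sigma ^ 2 / 2 * pxx m t x
       - Derive (fun y => Gc eps L u m t y * m t y) x = 0) /\
  (forall x, in_cc 0 L x -> m 0 x = m0 x /\ u T x = uT x) /\
  (forall t, in_cc 0 T t -> px u t 0 = 0 /\ px u t L = 0) /\
  (forall t x, in_cc 0 T t -> (x = 0 \/ x = L) ->
     sigma ^ 2 / 2 * px m t x + Gc eps L u m t x * m t x = 0).

(* Main.v *)
Require Import Defs.
From Stdlib Require Import Reals.
From Coquelicot Require Import Coquelicot.
Open Scope R_scope.
From Stdlib Require Import Lra Psatz.


Lemma ballR (x e y : R) : ball x e y <-> Rabs (y - x) < e.
Proof. unfold ball; simpl; unfold AbsRing_ball, abs, minus, plus, opp; simpl. tauto. Qed.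

Lemma cont_eps (f : R -> R) x :
  (forall eps, 0 < eps -> exists d, 0 < d /\ forall y, Rabs (y - x) < d -> Rabs (f y - f x) < eps) ->
  continuous f x.
Proof.
  intros H. apply filterlim_locally. intros eps.
  destruct (H eps (cond_pos eps)) as [d [Hd Hy]].
  exists (mkposreal d Hd). intros y Hb. apply ballR. apply ballR in Hb. simpl in Hb. now apply Hy.
Qed.

Lemma eps_cont (f : R -> R) x : continuous f x ->
  forall eps, 0 < eps -> exists d, 0 < d /\ forall y, Rabs (y - x) < d -> Rabs (f y - f x) < eps.
Proof.
  intros H eps He. apply filterlim_locally with (eps := mkposreal eps He) in H.
  destruct H as [d Hd]. exists d. split. apply cond_pos. intros y Hy.
  specialize (Hd y). rewrite ballR in Hd. apply Hd. now apply ballR.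
Qed.

Definition cl (a b x : R) : R := Rmax a (Rmin b x).

Lemma cl_in a b x : a <= b -> a <= cl a b x <= b.
Proof. intros. unfold cl, Rmax, Rmin. repeat destruct Rle_dec; lra. Qed.

Lemma cl_id a b x : a <= x <= b -> cl a b x = x.
Proof. intros. unfold cl, Rmax, Rmin. repeat destruct Rle_dec; lra. Qed.

Lemma cl_lip a b x y : a <= b -> Rabs (cl a b x - cl a b y) <= Rabs (x - y).
Proof. intros. unfold cl, Rmax, Rmin. repeat destruct Rle_dec; unfold Rabs; repeat destruct Rcase_abs; lra. Qed.

Lemma cl_loc a b x : a < x < b -> locally x (fun y => cl a b y = y).
Proof.
  intros H. assert (Hd : 0 < Rmin (x - a) (b - x)) by (apply Rmin_glb_lt; lra).
  exists (mkposreal _ Hd). intros y Hy. apply ballR in Hy. simpl in Hy.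
  apply cl_id. apply Rabs_def2 in Hy. revert Hy. unfold Rmin. destruct (Rle_dec (x - a) (b - x)); intros [? ?]; unfold minus, plus, opp in *; simpl in *; split; lra.
Qed.



Definition C2 (T L : R) (f : R -> R -> R) : Prop :=
  forall t x, continuity_2d_pt (fun t x => f (cl 0 T t) (cl 0 L x)) t x.

Lemma C2_of_rect T L f : 0 <= T -> 0 <= L -> cont_on_rect T L f -> C2 T L f.
Proof.
  intros HT HL H t x eps.
  assert (Hp : rect T L (cl 0 T t, cl 0 L x)) by (split; simpl; apply cl_in; lra).
  specialize (H _ Hp). apply filterlim_locally with (eps := eps) in H.
  destruct H as [d Hd]. exists d. intros u v Hu Hv.
  assert (Hq : rect T L (cl 0 T u, cl 0 L v)) by (split; simpl; apply cl_in; lra).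
  specialize (Hd (cl 0 T u, cl 0 L v)).
  assert (Hb : ball (cl 0 T t, cl 0 L x) d (cl 0 T u, cl 0 L v)).
  { split; apply ballR; simpl.
    - eapply Rle_lt_trans. apply cl_lip; lra. exact Hu.
    - eapply Rle_lt_trans. apply cl_lip; lra. exact Hv. }
  specialize (Hd Hb Hq). apply ballR in Hd. simpl in Hd. exact Hd.
Qed.

Lemma C2_ext T L f g : 0 <= T -> 0 <= L ->
  (forall t x, 0 <= t <= T -> 0 <= x <= L -> f t x = g t x) -> C2 T L f -> C2 T L g.
Proof.
  intros HT HL E H t x. eapply continuity_2d_pt_ext; [|apply H].
  intros; simpl. apply E; apply cl_in; lra.
Qed.

Lemma C2_plus T L f g : C2 T L f -> C2 T L g -> C2 T L (fun t x => f t x + g t x).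
Proof. intros Hf Hg t x. apply (continuity_2d_pt_plus (fun t x => f (cl 0 T t) (cl 0 L x)) (fun t x => g (cl 0 T t) (cl 0 L x))); auto. Qed.
Lemma C2_minus T L f g : C2 T L f -> C2 T L g -> C2 T L (fun t x => f t x - g t x).
Proof. intros Hf Hg t x. apply (continuity_2d_pt_minus (fun t x => f (cl 0 T t) (cl 0 L x)) (fun t x => g (cl 0 T t) (cl 0 L x))); auto. Qed.
Lemma C2_mult T L f g : C2 T L f -> C2 T L g -> C2 T L (fun t x => f t x * g t x).
Proof. intros Hf Hg t x. apply (continuity_2d_pt_mult (fun t x => f (cl 0 T t) (cl 0 L x)) (fun t x => g (cl 0 T t) (cl 0 L x))); auto. Qed.
Lemma C2_const T L c : C2 T L (fun _ _ => c).
Proof. intros t x. apply continuity_2d_pt_const. Qed.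
Lemma C2_comp T L (h : R -> R) f : (forall s, continuity_pt h s) -> C2 T L f -> C2 T L (fun t x => h (f t x)).
Proof. intros Hh Hf t x. apply (continuity_1d_2d_pt_comp h (fun t x => f (cl 0 T t) (cl 0 L x))); auto. Qed.
Lemma C2_t T L (h : R -> R) : (forall t, continuity_pt (fun t => h (cl 0 T t)) t) -> C2 T L (fun t x => h t).
Proof. intros Hh t x. apply (continuity_1d_2d_pt_comp (fun t => h (cl 0 T t)) (fun u v => u)); auto.
  apply continuity_2d_pt_id1. Qed.

Lemma c2d_slice (F : R -> R -> R) t x : continuity_2d_pt F t x -> continuous (fun y => F t y) x.
Proof.
  intros H. apply cont_eps. intros eps He. destruct (H (mkposreal eps He)) as [d Hd].
  exists d. split. apply cond_pos. intros y Hy. apply Hd; auto. rewrite Rminus_eq_0, Rabs_R0. apply cond_pos.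
Qed.
Lemma c2d_slice1 (F : R -> R -> R) t x : continuity_2d_pt F t x -> continuous (fun s => F s x) t.
Proof.
  intros H. apply cont_eps. intros eps He. destruct (H (mkposreal eps He)) as [d Hd].
  exists d. split. apply cond_pos. intros y Hy. apply Hd; auto. rewrite Rminus_eq_0, Rabs_R0. apply cond_pos.
Qed.

Lemma C2_slice T L f t y : C2 T L f -> continuous (fun x => f (cl 0 T t) (cl 0 L x)) y.
Proof. intros H. apply (c2d_slice (fun t x => f (cl 0 T t) (cl 0 L x))). apply H. Qed.

Lemma C2_exR T L f t : 0 <= T -> 0 <= L -> 0 <= t <= T -> C2 T L f -> ex_RInt (f t) 0 L.
Proof.
  intros HT HL Ht H. apply (ex_RInt_ext (fun x => f (cl 0 T t) (cl 0 L x))).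
  - intros x Hx. rewrite Rmin_left, Rmax_right in Hx by lra. rewrite !cl_id; lra.
  - apply (ex_RInt_continuous (V:=R_CompleteNormedModule)). intros; apply C2_slice; auto.
Qed.

Definition Ic (T L : R) (f : R -> R -> R) (t : R) : R := RInt (fun x => f (cl 0 T t) (cl 0 L x)) 0 L.

Lemma Ic_eq T L f t : 0 <= L -> 0 <= t <= T -> Ic T L f t = RInt (f t) 0 L.
Proof.
  intros HL Ht. unfold Ic. apply RInt_ext. intros x Hx. rewrite Rmin_left, Rmax_right in Hx by lra.
  rewrite !cl_id; lra.
Qed.


Lemma exRc (g : R -> R) a b : (forall x, continuous g x) -> ex_RInt g a b.
Proof. intros H. apply (ex_RInt_continuous (V:=R_CompleteNormedModule)). intros; apply H. Qed.

Lemma Ic_cont T L f : 0 <= L -> C2 T L f -> forall t0, continuous (Ic T L f) t0.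
Proof.
  intros HL H t0. apply cont_eps. intros eps He.
  set (F := fun u v => f (cl 0 T u) (cl 0 L v)).
  assert (He' : 0 < eps/(L+1)) by (apply Rdiv_lt_0_compat; lra).
  destruct (uniform_continuity_2d F (t0-1) (t0+1) 0 L (fun x y _ _ => H x y) (mkposreal _ He')) as [d Hd].
  exists (Rmin d 1). split. apply Rmin_glb_lt; [apply cond_pos| lra].
  intros s Hs.
  assert (Hs1: Rabs (s - t0) < d) by (eapply Rlt_le_trans; [exact Hs| apply Rmin_l]).
  assert (Hs2: Rabs (s - t0) < 1) by (eapply Rlt_le_trans; [exact Hs| apply Rmin_r]).
  assert (Ex: forall u, ex_RInt (F u) 0 L) by (intros; apply exRc; intros; apply C2_slice; auto).
  unfold Ic. fold (F s) (F t0).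
  assert (E: RInt (F s) 0 L - RInt (F t0) 0 L = RInt (fun x => F s x - F t0 x) 0 L).
  { symmetry. apply (RInt_minus (V:=R_CompleteNormedModule)); auto. }
  rewrite E. eapply Rle_lt_trans.
  apply abs_RInt_le_const with (M := eps/(L+1)). lra.
  apply (ex_RInt_minus (V:=R_NormedModule)); auto.
  intros x Hx. apply Rlt_le. apply Rabs_def2 in Hs2.
  apply (Hd t0 x s x); try lra. simpl. rewrite Rminus_eq_0, Rabs_R0. apply cond_pos.
  assert (eps / (L+1) * (L+1) = eps) by (field; lra). nra.
Qed.

Lemma loc_in a b x : a < x < b -> exists d, 0 < d /\ forall y, Rabs (y - x) < d -> a < y < b.
Proof.
  intros H. exists (Rmin (x - a) (b - x)). split. apply Rmin_glb_lt; lra.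
  intros y Hy. apply Rabs_def2 in Hy. revert Hy. unfold Rmin. destruct (Rle_dec (x - a) (b - x)); intros [? ?]; split; lra.
Qed.

Lemma loc_in' a b x : a < x < b -> locally x (fun y => a < y < b).
Proof.
  intros H. destruct (loc_in a b x H) as [d [Hd Hy]]. exists (mkposreal d Hd).
  intros y Hb. apply ballR in Hb. apply Hy. exact Hb.
Qed.

Lemma Ic_derive T L f t0 : 0 <= L -> C2 T L f -> C2 T L (pt f) ->
  (forall t x, 0 <= t <= T -> 0 <= x <= L -> ex_derive (fun s => f s x) t) ->
  0 < t0 < T -> is_derive (Ic T L f) t0 (RInt (pt f t0) 0 L).
Proof.
  intros HL Hf Hd Hex Ht0.
  set (g := fun t x => f t (cl 0 L x)).
  assert (D : is_derive (fun t => RInt (g t) 0 L) t0 (RInt (fun x => Derive (fun u => g u x) t0) 0 L)).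
  { apply is_derive_RInt_param.
    - eapply filter_imp; [|apply (loc_in' 0 T t0 Ht0)].
      intros t Ht x Hx. unfold g. apply Hex. lra. apply cl_in; lra.
    - intros x Hx. destruct (loc_in 0 T t0 Ht0) as [d [Hd0 Hy]].
      apply continuity_2d_pt_ext_loc with (fun u v => pt f (cl 0 T u) (cl 0 L v)).
      + exists (mkposreal d Hd0). intros u v Hu Hv. simpl in Hu. rewrite (cl_id 0 T u). reflexivity.
        specialize (Hy u Hu). lra.
      + apply Hd.
    - eapply filter_imp; [|apply (loc_in' 0 T t0 Ht0)].
      intros y Hy. unfold g. rewrite <- (cl_id 0 T y) by lra.
      apply exRc. intros; apply C2_slice; auto. }
  unfold Ic. eapply is_derive_ext_loc; [|].
  2:{ replace (RInt (pt f t0) 0 L) with (RInt (fun x => Derive (fun u => g u x) t0) 0 L). exact D.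
      apply RInt_ext. intros x Hx. rewrite Rmin_left, Rmax_right in Hx by lra. unfold g.
      rewrite cl_id by lra. reflexivity. }
  eapply filter_imp; [|apply (loc_in' 0 T t0 Ht0)].
  intros y Hy. simpl. unfold g. rewrite (cl_id 0 T y) by lra. reflexivity.
Qed.

Lemma bound2 T L f : 0 <= T -> 0 <= L -> C2 T L f ->
  exists K, forall t x, 0 <= t <= T -> 0 <= x <= L -> Rabs (f t x) <= K.
Proof.
  intros HT HL H.
  set (F := fun u v => f (cl 0 T u) (cl 0 L v)).
  destruct (uniform_continuity_2d F 0 T 0 L (fun x y _ _ => H x y) (mkposreal 1 Rlt_0_1)) as [d Hd].
  assert (Hd0 := cond_pos d).
  assert (S : forall n : nat, forall t x, 0 <= t <= T -> 0 <= x <= L -> t <= INR n * (d/2) -> x <= INR n * (d/2) ->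
             Rabs (F t x) <= Rabs (F 0 0) + INR n).
  { induction n.
    - intros t x Ht Hx H1 H2. change (INR 0) with 0 in *. replace t with 0 by lra. replace x with 0 by lra. lra.
    - intros t x Ht Hx H1 H2. rewrite S_INR in *.
      assert (Hst : forall t, 0 <= t -> t <= (INR n + 1) * (d/2) -> exists t', 0 <= t' <= t /\ t - t' <= d/2 /\ t' <= INR n * (d/2)).
      { intros s Hs1 Hs2. destruct (Rle_dec s (d/2)).
        - exists 0. split; [lra|split; [lra|]]. assert (0 <= INR n) by apply pos_INR. nra.
        - exists (s - d/2). split; [lra|split; lra]. }
      destruct (Hst t ltac:(lra) H1) as [t' [Ht'1 [Ht'2 Ht'3]]].
      destruct (Hst x ltac:(lra) H2) as [x' [Hx'1 [Hx'2 Hx'3]]].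
      assert (IH : Rabs (F t' x') <= Rabs (F 0 0) + INR n).
      { apply IHn; try split; lra. }
      assert (Hc : Rabs (F t x - F t' x') < 1).
      { apply (Hd t' x' t x); try lra; rewrite Rabs_right; lra. }
      assert (Rabs (F t x) <= Rabs (F t' x') + Rabs (F t x - F t' x')).
      { replace (F t x) with (F t' x' + (F t x - F t' x')) at 1 by ring. apply Rabs_triang. }
      lra. }
  destruct (archimed ((T + L) * 2 / d)) as [Ha _].
  set (n := Z.to_nat (up ((T + L) * 2 / d))).
  assert (Hn : (T + L) * 2 / d <= INR n).
  { unfold n. rewrite INR_IZR_INZ, Znat.Z2Nat.id. lra. apply le_IZR. assert (0 <= (T + L) * 2 / d).
    apply Rmult_le_pos. lra. left; apply Rinv_0_lt_compat; lra. lra. }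
  assert (Hn' : T + L <= INR n * (d / 2)).
  { assert ((T + L) * 2 / d * (d/2) = T + L) by (field; lra).
    assert (0 <= INR n) by apply pos_INR. nra. }
  exists (Rabs (F 0 0) + INR n). intros t x Ht Hx.
  replace (f t x) with (F t x) by (unfold F; rewrite !cl_id; lra).
  apply S; lra.
Qed.

Lemma ftc (F g : R -> R) a b : a <= b -> (forall x, a <= x <= b -> is_derive F x (g x)) ->
  (forall x, continuous g x) -> RInt g a b = F b - F a.
Proof.
  intros Hab HF Hg.
  set (H := fun x => RInt g a x).
  assert (DH : forall x, is_derive H x (g x)).
  { intros x. apply (is_derive_RInt g H a x); auto.
    apply filter_forall. intros y. apply (RInt_correct (V:=R_CompleteNormedModule)). apply exRc; auto. }
  destruct (MVT_gen (fun x => F x - H x) a b (fun _ => 0)) as [c [_ Hc]].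
  - intros x Hx. rewrite Rmin_left, Rmax_right in Hx by lra.
    replace 0 with (g x - g x) by ring. apply (is_derive_minus F H x). apply HF; lra. apply DH.
  - intros x Hx. rewrite Rmin_left, Rmax_right in Hx by lra. apply continuity_pt_minus.
    + apply continuity_pt_filterlim. apply (ex_derive_continuous (K:=R_AbsRing) (V:=R_NormedModule)). eexists. apply HF; lra.
    + apply continuity_pt_filterlim. apply (ex_derive_continuous (K:=R_AbsRing) (V:=R_NormedModule)). eexists. apply DH.
  - assert (H a = 0) by (unfold H; rewrite RInt_point; reflexivity).
    unfold H in *. lra.
Qed.

Lemma mono (g : R -> R) a b : a <= b -> (forall x, a <= x <= b -> continuous g x) ->
  (forall x, a < x < b -> exists d, is_derive g x d /\ 0 <= d) -> g a <= g b.
Proof.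
  intros Hab Hc Hd.
  destruct (MVT_gen g a b (fun x => Rmax 0 (Derive g x))) as [c [_ Hm]].
  - intros x Hx. rewrite Rmin_left, Rmax_right in Hx by lra. destruct (Hd x Hx) as [d [D Hd0]].
    rewrite (is_derive_unique _ _ _ D). rewrite Rmax_right by lra. exact D.
  - intros x Hx. rewrite Rmin_left, Rmax_right in Hx by lra. apply continuity_pt_filterlim, Hc; lra.
  - assert (0 <= Rmax 0 (Derive g c)) by apply Rmax_l. nra.
Qed.

Lemma zero_int (g : R -> R) a b : a < b -> (forall x, continuous g x) ->
  (forall x, a <= x <= b -> 0 <= g x) -> RInt g a b <= 0 -> forall x, a <= x <= b -> g x = 0.
Proof.
  intros Hab Hc Hp Hi x0 Hx0. destruct (Hp x0 Hx0) as [Hpos|]; [|auto]. exfalso.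
  destruct (eps_cont g x0 (Hc x0) (g x0 / 2) ltac:(lra)) as [d [Hd Hy]].
  set (al := Rmax a (x0 - d/2)). set (be := Rmin b (x0 + d/2)).
  assert (Hal : a <= al <= x0 /\ x0 - d/2 <= al) by (unfold al, Rmax; destruct Rle_dec; lra).
  assert (Hbe : x0 <= be <= b /\ be <= x0 + d/2) by (unfold be, Rmin; destruct Rle_dec; lra).
  assert (Hab' : al < be).
  { unfold al, be, Rmax, Rmin. repeat destruct Rle_dec; lra. }
  assert (E1 : RInt g a al + RInt g al b = RInt g a b) by (apply (RInt_Chasles (V:=R_CompleteNormedModule)); apply exRc; auto).
  assert (E2 : RInt g al be + RInt g be b = RInt g al b) by (apply (RInt_Chasles (V:=R_CompleteNormedModule)); apply exRc; auto).
  assert (0 <= RInt g a al) by (apply RInt_ge_0; [lra| apply exRc; auto| intros; apply Hp; lra]).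
  assert (0 <= RInt g be b) by (apply RInt_ge_0; [lra| apply exRc; auto| intros; apply Hp; lra]).
  assert (0 < RInt g al be).
  { apply RInt_gt_0; auto. intros x Hx. assert (Rabs (g x - g x0) < g x0 / 2).
    apply Hy. apply Rabs_def1; lra. apply Rabs_def2 in H1. lra. }
  lra.
Qed.


Lemma pow_le1 a k : 0 <= a <= 1 -> a ^ k <= 1.
Proof. intros H. induction k; simpl. lra. assert (0 <= a ^ k) by (apply pow_le; lra). nra. Qed.

Lemma phi_derive n s : (2 <= n)%nat ->
  is_derive (fun s => (Rmin s 0) ^ n) s (INR n * (Rmin s 0) ^ (n - 1)).
Proof.
  intros Hn. destruct (Rtotal_order s 0) as [Hs|[Hs|Hs]].
  - apply is_derive_ext_loc with (fun y => y ^ n).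
    + eapply filter_imp; [|apply (loc_in' (s - 1) 0 s ltac:(split; lra))].
      intros y Hy. rewrite Rmin_left by lra. reflexivity.
    + rewrite Rmin_left by lra. replace (n - 1)%nat with (Init.Nat.pred n) by lia.
      replace (INR n * s ^ Init.Nat.pred n) with (INR n * 1 * s ^ Init.Nat.pred n) by ring.
      apply (is_derive_pow (fun y => y)). apply (is_derive_id (K:=R_AbsRing)).
  - subst s. rewrite Rmin_right by lra. rewrite pow_i by lia. rewrite Rmult_0_r.
    apply is_derive_Reals. intros eps He. assert (Hd : 0 < Rmin eps 1) by (apply Rmin_glb_lt; lra).
    exists (mkposreal _ Hd). intros h Hh Hab. simpl in Hab.
    assert (Hab1 : Rabs h < eps) by (eapply Rlt_le_trans; [exact Hab|apply Rmin_l]).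
    assert (Hab2 : Rabs h < 1) by (eapply Rlt_le_trans; [exact Hab|apply Rmin_r]).
    rewrite Rplus_0_l. rewrite (Rmin_right 0 0) by lra. rewrite pow_i by lia. 
    destruct (Rle_dec h 0) as [Hh0|Hh0].
    + rewrite Rmin_left by lra. destruct n as [|[|k]]; [lia|lia|].
      replace ((h ^ S (S k) - 0) / h - 0) with (h * h ^ k).
      2:{ simpl. field. exact Hh. }
      rewrite Rabs_mult, <- RPow_abs.
      assert (Rabs h ^ k <= 1) by (apply pow_le1; split; [apply Rabs_pos|lra]).
      assert (0 <= Rabs h) by apply Rabs_pos. nra.
    + rewrite Rmin_right by lra. rewrite pow_i by lia.
      replace ((0 - 0) / h - 0) with 0 by (field; exact Hh). rewrite Rabs_R0. lra.
  - apply is_derive_ext_loc with (fun y => 0).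
    + eapply filter_imp; [|apply (loc_in' 0 (s + 1) s ltac:(split; lra))].
      intros y Hy. rewrite Rmin_right by lra. rewrite pow_i by lia. reflexivity.
    + rewrite Rmin_right by lra. rewrite pow_i by lia. rewrite Rmult_0_r.
      apply (is_derive_const (K:=R_AbsRing) (V:=R_NormedModule)).
Qed.

Definition p4 (s : R) := (Rmin s 0) ^ 4.
Definition p3 (s : R) := 4 * (Rmin s 0) ^ 3.
Definition p2 (s : R) := 12 * (Rmin s 0) ^ 2.

Lemma is_derive_eq (f : R -> R) x l l' : is_derive f x l -> l = l' -> is_derive f x l'.
Proof. intros H E; subst; exact H. Qed.

Lemma p4_d s : is_derive p4 s (p3 s).
Proof. unfold p4, p3. eapply is_derive_eq. apply (phi_derive 4). lia. simpl; ring. Qed.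
Lemma p3_d s : is_derive p3 s (p2 s).
Proof. unfold p3, p2. eapply is_derive_eq. apply is_derive_scal. apply (phi_derive 3). lia. simpl; ring. Qed.
Lemma p2_d s : is_derive p2 s (24 * Rmin s 0).
Proof. unfold p2. eapply is_derive_eq. apply is_derive_scal. apply (phi_derive 2). lia. simpl; ring. Qed.

Lemma cont_of_d (f df : R -> R) : (forall s, is_derive f s (df s)) -> forall s, continuity_pt f s.
Proof. intros H s. apply continuity_pt_filterlim.
  apply (ex_derive_continuous (K:=R_AbsRing) (V:=R_NormedModule)). eexists. apply H. Qed.

Lemma p4_c s : continuity_pt p4 s. Proof. apply (cont_of_d _ _ p4_d). Qed.
Lemma p3_c s : continuity_pt p3 s. Proof. apply (cont_of_d _ _ p3_d). Qed.
Lemma p2_c s : continuity_pt p2 s. Proof. apply (cont_of_d _ _ p2_d). Qed.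

Lemma p4_ge0 s : 0 <= p4 s.
Proof. unfold p4. set (a := Rmin s 0). assert (0 <= a * a) by nra. simpl. nra. Qed.
Lemma p2_ge0 s : 0 <= p2 s.
Proof. unfold p2. assert (0 <= Rmin s 0 ^ 2) by (simpl; nra). lra. Qed.
Lemma p3_le0 s : p3 s <= 0.
Proof. unfold p3, Rmin. destruct Rle_dec. assert (0 <= s * s) by nra. simpl. nra. simpl; lra. Qed.
Lemma p3_s s : 0 <= p3 s * s.
Proof. unfold p3, Rmin. destruct Rle_dec. simpl. assert (0 <= s * s) by nra. nra. simpl; lra. Qed.
Lemma p2_ss s : p2 s * (s * s) = 12 * p4 s.
Proof. unfold p2, p4, Rmin. destruct Rle_dec; simpl; ring. Qed.
Lemma p4_pos s : 0 <= s -> p4 s = 0.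
Proof. intros. unfold p4, Rmin. destruct Rle_dec. replace s with 0 by lra. simpl; ring. simpl; ring. Qed.
Lemma p4_zero s : p4 s = 0 -> 0 <= s.
Proof. unfold p4, Rmin. destruct Rle_dec; intros H; [|lra].
  destruct (Rle_dec 0 s); auto. exfalso. assert (0 < s * s) by nra. simpl in H. nra. Qed.


Lemma C12_facts T L w : 0 <= T -> 0 <= L -> C12_rect T L w ->
  (forall t x, 0 <= t <= T -> 0 <= x <= L ->
     ex_derive (fun s => w s x) t /\ ex_derive (fun y => w t y) x /\ ex_derive (fun y => px w t y) x) /\
  C2 T L w /\ C2 T L (pt w) /\ C2 T L (px w) /\ C2 T L (pxx w).
Proof.
  intros HT HL [H1 [H2 [H3 [H4 H5]]]].
  split. intros t x Ht Hx. apply H1. split; assumption.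
  repeat split; apply C2_of_rect; auto.
Qed.

Lemma C2_pow T L f n : C2 T L f -> C2 T L (fun t x => f t x ^ n).
Proof.
  intros H. induction n.
  - exact (C2_const T L 1).
  - exact (C2_mult T L f (fun t x => f t x ^ n) H IHn).
Qed.

Ltac c2 := repeat match goal with
  | |- C2 _ _ (fun t x => _ + _) => apply C2_plus
  | |- C2 _ _ (fun t x => _ - _) => apply C2_minus
  | |- C2 _ _ (fun t x => _ * _) => apply C2_mult
  | |- C2 _ _ (fun t x => _ ^ _) => apply C2_pow
  | |- C2 _ _ (fun t x => ?c) => apply C2_const
  | |- C2 _ _ (fun t x => p4 _) => apply C2_comp; [exact p4_c|]
  | |- C2 _ _ (fun t x => p3 _) => apply C2_comp; [exact p3_c|]
  | |- C2 _ _ (fun t x => p2 _) => apply C2_comp; [exact p2_c|]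
  | H : C2 ?T ?L ?F |- C2 ?T ?L (fun t x => ?F t x) => exact H
  | H : C2 ?T ?L ?F |- C2 ?T ?L ?F => exact H
  end.

Definition Aint (L : R) (u m : R -> R -> R) (t : R) := RInt (fun y => px u t y * m t y) 0 L.

Lemma C2_A T L u m : 0 <= T -> 0 <= L -> C2 T L (px u) -> C2 T L m -> C2 T L (fun t x => Aint L u m t).
Proof.
  intros HT HL Hu Hm. apply C2_t. intros t. apply continuity_pt_filterlim.
  apply (continuous_ext (Ic T L (fun t y => px u t y * m t y)) (fun t => Aint L u m (cl 0 T t)) t).
  - intros s. unfold Aint, Ic. apply RInt_ext. intros x Hx. rewrite Rmin_left, Rmax_right in Hx by lra.
    rewrite (cl_id 0 L x) by lra. reflexivity.
  - apply (Ic_cont T L (fun t y => px u t y * m t y)). exact HL. c2.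
Qed.

Lemma Gc_eq eps L u m t x : Gc eps L u m t x = /2 * (b_of eps + c_of eps * Aint L u m t - px u t x).
Proof. reflexivity. Qed.

Lemma C2_G T L eps u m : 0 <= T -> 0 <= L -> C2 T L (px u) -> C2 T L m -> C2 T L (Gc eps L u m).
Proof.
  intros HT HL Hu Hm. assert (HA := C2_A T L u m HT HL Hu Hm).
  apply C2_ext with (fun t x => /2 * (b_of eps + c_of eps * Aint L u m t - px u t x)); auto.
  c2.
Qed.

Lemma G_dx eps L u m t x : ex_derive (fun y => px u t y) x ->
  is_derive (fun y => Gc eps L u m t y) x (- /2 * pxx u t x).
Proof.
  intros H. unfold Gc. eapply is_derive_eq. apply is_derive_scal.
  apply (is_derive_minus (fun _ => b_of eps + c_of eps * RInt (fun y : R => px u t y * m t y) 0 L) (fun y => px u t y)).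
  apply (is_derive_const (K:=R_AbsRing) (V:=R_NormedModule)). apply Derive_correct. exact H.
  unfold pxx. simpl. unfold minus, plus, opp, zero; simpl. ring.
Qed.

Definition Fl sigma eps L u m t y := sigma ^ 2 / 2 * px m t y + Gc eps L u m t y * m t y.
Definition dFl sigma eps L u m t x :=
  sigma ^ 2 / 2 * pxx m t x + (- /2 * pxx u t x * m t x + Gc eps L u m t x * px m t x).

Lemma Gm_dx eps L u m t x : ex_derive (fun y => px u t y) x -> ex_derive (fun y => m t y) x ->
  is_derive (fun y => Gc eps L u m t y * m t y) x (- /2 * pxx u t x * m t x + Gc eps L u m t x * px m t x).
Proof.
  intros H1 H2. eapply is_derive_eq.
  apply (is_derive_mult (fun y => Gc eps L u m t y) (fun y => m t y)).
  apply G_dx; auto. apply Derive_correct; auto. intros; apply Rmult_comm.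
  unfold px. simpl. unfold plus, mult; simpl. ring.
Qed.

Lemma Fl_dx sigma eps L u m t x : ex_derive (fun y => px u t y) x -> ex_derive (fun y => m t y) x ->
  ex_derive (fun y => px m t y) x ->
  is_derive (Fl sigma eps L u m t) x (dFl sigma eps L u m t x).
Proof.
  intros H1 H2 H3. unfold Fl, dFl. eapply is_derive_eq.
  apply (is_derive_plus (fun y => sigma ^ 2 / 2 * px m t y) (fun y => Gc eps L u m t y * m t y)).
  apply is_derive_scal. apply Derive_correct; auto. apply Gm_dx; auto.
  unfold pxx. simpl. unfold plus; simpl. reflexivity.
Qed.

Lemma ftc_slice T L D F t : 0 <= T -> 0 <= L -> C2 T L D -> 0 <= t <= T ->
  (forall x, 0 <= x <= L -> is_derive F x (D t x)) -> RInt (D t) 0 L = F L - F 0.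
Proof.
  intros HT HL HD Ht HF.
  transitivity (RInt (fun x => D (cl 0 T t) (cl 0 L x)) 0 L).
  - apply RInt_ext. intros x Hx. rewrite Rmin_left, Rmax_right in Hx by lra. rewrite !cl_id; auto; lra.
  - apply ftc; auto. intros x Hx. rewrite !cl_id; auto.
    intros y. apply C2_slice; auto.
Qed.


Lemma const_d (g : R -> R) a b : a <= b -> (forall x, continuous g x) ->
  (forall x, a < x < b -> is_derive g x 0) -> g b = g a.
Proof.
  intros Hab Hc Hd. apply Rle_antisym.
  - assert (- g a <= - g b); [|lra].
    apply (mono (fun x => - g x)); auto.
    + intros x _. apply (continuous_opp (K:=R_AbsRing) (V:=R_NormedModule)). apply Hc.
    + intros x Hx. exists (- 0). split; [|lra]. apply (is_derive_opp g). apply Hd; auto.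
  - apply mono; auto. intros x Hx. exists 0. split; [apply Hd; auto|lra].
Qed.

Ltac unpack Hs T L u m :=
  let Cu := fresh "Cu" in let Cm := fresh "Cm" in
  destruct Hs as [Cu [Cm [Eu [Em [Hin [Hneu Hrob]]]]]];
  let HT0 := fresh in let HL0 := fresh in
  assert (HT0 : 0 <= T) by lra; assert (HL0 : 0 <= L) by lra;
  destruct (C12_facts T L u HT0 HL0 Cu) as [Du [Cu0 [Cut [Cux Cuxx]]]];
  destruct (C12_facts T L m HT0 HL0 Cm) as [Dm [Cm0 [Cmt [Cmx Cmxx]]]].

Lemma FP L T sigma r eps uT m0 u m : 0 < L -> 0 < T -> mfg_solution L T sigma r eps uT m0 u m ->
  forall t x, 0 < t < T -> 0 < x < L -> pt m t x = dFl sigma eps L u m t x.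
Proof.
  intros HL HT Hs. unpack Hs T L u m. intros t x Ht Hx.
  specialize (Em t x Ht Hx).
  destruct (Du t x ltac:(lra) ltac:(lra)) as [_ [_ D3]].
  destruct (Dm t x ltac:(lra) ltac:(lra)) as [_ [E2 _]].
  assert (E : Derive (fun y : R => Gc eps L u m t y * m t y) x = - /2 * pxx u t x * m t x + Gc eps L u m t x * px m t x)
    by (apply is_derive_unique; apply Gm_dx; auto).
  rewrite E in Em.
  unfold dFl. lra.
Qed.


Lemma mass L T sigma r eps uT m0 u m : 0 < L -> 0 < T -> mfg_solution L T sigma r eps uT m0 u m ->
  RInt m0 0 L = 1 -> forall t, 0 <= t <= T -> RInt (m t) 0 L = 1.
Proof.
  intros HL HT Hs Hm0. assert (HFP := FP L T sigma r eps uT m0 u m HL HT Hs). unpack Hs T L u m.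
  assert (CG := C2_G T L eps u m ltac:(lra) ltac:(lra) Cux Cm0).
  Time assert (CdF : C2 T L (dFl sigma eps L u m)) by (unfold dFl; c2).
  assert (D0 : forall t, 0 < t < T -> is_derive (Ic T L m) t 0).
  { intros t Ht. replace 0 with (RInt (pt m t) 0 L).
    apply (Ic_derive T L m t); try assumption; try lra. intros s x Hs Hx. exact (proj1 (Dm s x Hs Hx)).
    transitivity (RInt (dFl sigma eps L u m t) 0 L).
    - apply RInt_ext. intros x Hx. rewrite Rmin_left, Rmax_right in Hx by lra. apply HFP; auto.
    - rewrite (ftc_slice T L (dFl sigma eps L u m) (Fl sigma eps L u m t) t); try lra; try assumption.
      + pose proof (Hrob t 0 ltac:(split; lra) ltac:(left; reflexivity)).
        pose proof (Hrob t L ltac:(split; lra) ltac:(right; reflexivity)).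
        unfold Fl. lra.
      + intros x Hx. destruct (Du t x ltac:(lra) Hx) as [_ [_ D3]].
        destruct (Dm t x ltac:(lra) Hx) as [_ [E2 E3]]. apply Fl_dx; auto. }
  intros t Ht.
  rewrite <- (Ic_eq T L m t) by lra.
  rewrite (const_d (Ic T L m) 0 t); try lra.
  - rewrite (Ic_eq T L m 0) by lra. rewrite <- Hm0. apply RInt_ext. intros x Hx.
    rewrite Rmin_left, Rmax_right in Hx by lra. apply Hin. split; lra.
  - apply (Ic_cont T L m); [lra|assumption].
  - intros x Hx. apply D0; lra.
Qed.


Lemma RInt_add (f g : R -> R) a b : ex_RInt f a b -> ex_RInt g a b ->
  RInt (fun x => f x + g x) a b = RInt f a b + RInt g a b.
Proof. intros. apply (RInt_plus (V:=R_CompleteNormedModule)); auto. Qed.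
Lemma RInt_sc (f : R -> R) l a b : ex_RInt f a b -> RInt (fun x => l * f x) a b = l * RInt f a b.
Proof. intros. apply (RInt_scal (V:=R_CompleteNormedModule)); auto. Qed.
Lemma RInt_zero (f : R -> R) a b : a <= b -> (forall x, a < x < b -> f x = 0) -> RInt f a b = 0.
Proof. intros Hab H. rewrite (RInt_ext f (fun _ => 0)). rewrite RInt_const. unfold scal; simpl; unfold mult; simpl. ring.
  intros x Hx. rewrite Rmin_left, Rmax_right in Hx by lra. auto. Qed.

Lemma ineq_G (s a g w p2m p4m : R) : 0 < s -> 0 <= p2m -> p2m * (w * w) = 12 * p4m ->
  p2m * (- (a * (s ^ 2 / 2 * a + g * w))) <= 6 * g ^ 2 / s ^ 2 * p4m.
Proof.
  intros Hs Hp E.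
  assert (Hs2 : 0 < s ^ 2) by (apply pow_lt; lra).
  assert (H1 : - (a * (s ^ 2 / 2 * a + g * w)) <= g ^ 2 * (w * w) / (2 * s ^ 2)).
  { assert (0 <= (s ^ 2 * a + g * w) ^ 2) by (apply pow2_ge_0).
    apply Rmult_le_reg_r with (2 * s ^ 2). lra.
    replace (g ^ 2 * (w * w) / (2 * s ^ 2) * (2 * s ^ 2)) with (g ^ 2 * (w * w)) by (field; lra).
    nra. }
  apply Rmult_le_compat_l with (r := p2m) in H1; auto.
  replace (6 * g ^ 2 / s ^ 2 * p4m) with (p2m * (g ^ 2 * (w * w) / (2 * s ^ 2))); auto.
  replace (p2m * (g ^ 2 * (w * w) / (2 * s ^ 2))) with ((p2m * (w * w)) * g ^ 2 / (2 * s ^ 2)) by (field; lra).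
  rewrite E. field. lra.
Qed.

Lemma m_nonneg L T sigma r eps uT m0 u m : 0 < L -> 0 < T -> 0 < sigma ->
  mfg_solution L T sigma r eps uT m0 u m -> (forall x, 0 <= x <= L -> 0 <= m0 x) ->
  forall t x, 0 <= t <= T -> 0 <= x <= L -> 0 <= m t x.
Proof.
  intros HL HT Hsig Hs Hm0. pose proof (FP L T sigma r eps uT m0 u m HL HT Hs) as HFP. unpack Hs T L u m.
  assert (CG := C2_G T L eps u m ltac:(lra) ltac:(lra) Cux Cm0).
  assert (CdF : C2 T L (dFl sigma eps L u m)) by (unfold dFl; c2).
  assert (CF : C2 T L (Fl sigma eps L u m)) by (unfold Fl; c2).
  destruct (bound2 T L (Gc eps L u m) ltac:(lra) ltac:(lra) CG) as [K0 HK0].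
  set (Kc := 6 * K0 ^ 2 / sigma ^ 2).
  set (fm := fun t x => p4 (m t x)).
  assert (Cfm : C2 T L fm) by (unfold fm; c2).
  assert (Dfm : forall t x, 0 <= t <= T -> 0 <= x <= L -> is_derive (fun s => fm s x) t (p3 (m t x) * pt m t x)).
  { intros t x Ht Hx. unfold fm. eapply is_derive_eq.
    apply (is_derive_comp p4 (fun s => m s x)). apply p4_d. apply Derive_correct. exact (proj1 (Dm t x Ht Hx)).
    unfold scal; simpl; unfold mult; simpl. unfold pt. ring. }
  assert (Cpfm : C2 T L (pt fm)).
  { apply C2_ext with (fun t x => p3 (m t x) * pt m t x); try lra. 2: c2.
    intros t x Ht Hx. symmetry. apply is_derive_unique. apply Dfm; auto. }
  set (D2 := fun t x => p2 (m t x) * px m t x * Fl sigma eps L u m t x + p3 (m t x) * dFl sigma eps L u m t x).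
  assert (CD2 : C2 T L D2) by (unfold D2; c2).
  assert (Key : forall t, 0 < t < T -> RInt (pt fm t) 0 L <= Kc * Ic T L fm t).
  { intros t Ht.
    assert (E1 : RInt (pt fm t) 0 L = RInt (fun x => p3 (m t x) * dFl sigma eps L u m t x) 0 L).
    { apply RInt_ext. intros x Hx. rewrite Rmin_left, Rmax_right in Hx by lra.
      rewrite <- HFP by lra. apply is_derive_unique. apply Dfm; lra. }
    assert (E2 : RInt (D2 t) 0 L = 0).
    { assert (HD : forall x, 0 <= x <= L -> is_derive (fun y => p3 (m t y) * Fl sigma eps L u m t y) x (D2 t x)).
      { intros x Hx. destruct (Du t x ltac:(lra) Hx) as [_ [_ D3]].
        destruct (Dm t x ltac:(lra) Hx) as [_ [E2 E3]].
        unfold D2. eapply is_derive_eq.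
        apply (is_derive_mult (fun y => p3 (m t y)) (fun y => Fl sigma eps L u m t y)).
        apply (is_derive_comp p3 (fun y => m t y)). apply p3_d. apply Derive_correct; auto.
        apply Fl_dx; auto. intros; apply Rmult_comm.
        unfold scal, plus, mult; simpl; unfold mult; simpl. unfold px. ring. }
      rewrite (ftc_slice T L D2 (fun y => p3 (m t y) * Fl sigma eps L u m t y) t); try lra; try assumption.
      pose proof (Hrob t 0 ltac:(split; lra) ltac:(left; reflexivity)) as R0.
      pose proof (Hrob t L ltac:(split; lra) ltac:(right; reflexivity)) as R1.
      unfold Fl. rewrite R0, R1, !Rmult_0_r. apply Rminus_diag_eq. reflexivity. }
    rewrite E1, Ic_eq by lra.
    apply Rle_trans with (RInt (fun x => D2 t x + Kc * fm t x) 0 L).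
    - apply RInt_le. lra.
      + apply (C2_exR T L (fun t x => p3 (m t x) * dFl sigma eps L u m t x)); try lra. c2.
      + apply (C2_exR T L (fun t x => D2 t x + Kc * fm t x)); try lra. c2.
      + intros x Hx. unfold D2, fm. unfold Fl.
        assert (HG : Gc eps L u m t x ^ 2 <= K0 ^ 2).
        { specialize (HK0 t x ltac:(lra) ltac:(lra)). rewrite <- (pow2_abs (Gc eps L u m t x)).
          apply pow_incr. split. apply Rabs_pos. auto. }
        pose proof (ineq_G sigma (px m t x) (Gc eps L u m t x) (m t x) (p2 (m t x)) (p4 (m t x)) Hsig (p2_ge0 _) (p2_ss _)).
        assert (0 <= p4 (m t x)) by apply p4_ge0.
        assert (6 * Gc eps L u m t x ^ 2 / sigma ^ 2 * p4 (m t x) <= Kc * p4 (m t x)).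
        { apply Rmult_le_compat_r; auto. unfold Kc. unfold Rdiv. apply Rmult_le_compat_r.
          left; apply Rinv_0_lt_compat, pow_lt; lra. lra. }
        nra.
    - rewrite RInt_add, RInt_sc, E2.
      + lra.
      + apply (C2_exR T L fm); try lra; auto.
      + apply (C2_exR T L D2); try lra; auto.
      + apply (C2_exR T L (fun t x => Kc * fm t x)); try lra. c2. }
  assert (Z0 : Ic T L fm 0 = 0).
  { rewrite Ic_eq by lra. apply RInt_zero. lra. intros x Hx. unfold fm. apply p4_pos.
    rewrite (proj1 (Hin x ltac:(split; lra))). apply Hm0; lra. }
  assert (Mon : forall t, 0 <= t <= T -> Ic T L fm t <= 0).
  { intros t Ht.
    assert (HH : - (exp (- Kc * 0) * Ic T L fm 0) <= - (exp (- Kc * t) * Ic T L fm t)).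
    { apply (mono (fun s => - (exp (- Kc * s) * Ic T L fm s))); try lra.
      - intros s _. apply (continuous_opp (K:=R_AbsRing) (V:=R_NormedModule)).
        apply (continuous_mult (K:=R_AbsRing) (fun s => exp (- Kc * s)) (Ic T L fm)).
        + apply (ex_derive_continuous (K:=R_AbsRing) (V:=R_NormedModule)). auto_derive. auto.
        + apply Ic_cont; [lra|auto].
      - intros s Hs'. 
        assert (Hd : is_derive (Ic T L fm) s (RInt (pt fm s) 0 L)).
        { apply (Ic_derive T L fm s); try lra; auto. intros a b Ha Hb. eexists. apply Dfm; auto. }
        assert (He : is_derive (fun s => exp (- Kc * s)) s (- Kc * exp (- Kc * s))).
        { auto_derive. auto. ring. }
        eexists. split.
        + apply (is_derive_opp (fun s => exp (- Kc * s) * Ic T L fm s)).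
          apply (is_derive_mult (fun s => exp (- Kc * s)) (Ic T L fm)); eauto. intros; apply Rmult_comm.
        + unfold opp, plus, mult; simpl; unfold mult, plus; simpl.
          specialize (Key s ltac:(lra)). assert (0 < exp (- Kc * s)) by apply exp_pos. nra. }
    rewrite Z0 in HH. assert (0 < exp (- Kc * t)) by apply exp_pos. nra. }
  intros t x Ht Hx.
  assert (Z : forall y, 0 <= y <= L -> fm (cl 0 T t) (cl 0 L y) = 0).
  { apply (zero_int (fun y => fm (cl 0 T t) (cl 0 L y)) 0 L); try lra.
    - intros y. apply C2_slice. auto.
    - intros y _. apply p4_ge0.
    - apply Mon. auto. }
  specialize (Z x Hx). rewrite !cl_id in Z by lra. apply p4_zero. exact Z.
Qed.


Lemma u_nonneg L T sigma r eps uT m0 u m : 0 < L -> 0 < T -> 0 < sigma -> 0 < r ->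
  mfg_solution L T sigma r eps uT m0 u m -> (forall x, 0 <= x <= L -> 0 <= uT x) ->
  forall t x, 0 <= t <= T -> 0 <= x <= L -> 0 <= u t x.
Proof.
  intros HL HT Hsig Hr Hs HuT. unpack Hs T L u m.
  set (fu := fun t x => p4 (u t x)).
  assert (Cfu : C2 T L fu) by (unfold fu; c2).
  assert (Dfu : forall t x, 0 <= t <= T -> 0 <= x <= L -> is_derive (fun s => fu s x) t (p3 (u t x) * pt u t x)).
  { intros t x Ht Hx. unfold fu. eapply is_derive_eq.
    apply (is_derive_comp p4 (fun s => u s x)). apply p4_d. apply Derive_correct. exact (proj1 (Du t x Ht Hx)).
    unfold scal; simpl; unfold mult; simpl. unfold pt. ring. }
  set (D3 := fun t x => p2 (u t x) * px u t x * px u t x + p3 (u t x) * pxx u t x).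
  assert (CD3 : C2 T L D3) by (unfold D3; c2).
  assert (Key : forall t, 0 < t < T -> 0 <= RInt (pt fu t) 0 L).
  { intros t Ht.
    assert (E1 : RInt (pt fu t) 0 L = RInt (fun x => p3 (u t x) * (- (sigma ^ 2 / 2) * pxx u t x + r * u t x - Gc eps L u m t x ^ 2)) 0 L).
    { apply RInt_ext. intros x Hx. rewrite Rmin_left, Rmax_right in Hx by lra.
      transitivity (p3 (u t x) * pt u t x). apply is_derive_unique. apply Dfu; lra.
      specialize (Eu t x Ht Hx). f_equal. lra. }
    assert (E2 : RInt (D3 t) 0 L = 0).
    { assert (HD : forall x, 0 <= x <= L -> is_derive (fun y => p3 (u t y) * px u t y) x (D3 t x)).
      { intros x Hx. destruct (Du t x ltac:(lra) Hx) as [_ [E2 E3]].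
        unfold D3. eapply is_derive_eq.
        apply (is_derive_mult (fun y => p3 (u t y)) (fun y => px u t y)).
        apply (is_derive_comp p3 (fun y => u t y)). apply p3_d. apply Derive_correct; auto.
        apply Derive_correct; auto. intros; apply Rmult_comm.
        unfold scal, plus, mult; simpl; unfold mult; simpl. unfold pxx, px. ring. }
      rewrite (ftc_slice T L D3 (fun y => p3 (u t y) * px u t y) t); try lra; try assumption.
      destruct (Hneu t ltac:(split; lra)) as [R0 R1].
      rewrite R0, R1, !Rmult_0_r. apply Rminus_diag_eq. reflexivity. }
    assert (CG := C2_G T L eps u m ltac:(lra) ltac:(lra) Cux Cm0).
    rewrite E1.
    apply Rle_trans with (RInt (fun x => - (sigma ^ 2 / 2) * D3 t x) 0 L).
    - rewrite RInt_sc, E2. lra. apply (C2_exR T L D3); try lra; auto.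
    - apply RInt_le. lra.
      + apply (C2_exR T L (fun t x => - (sigma ^ 2 / 2) * D3 t x)); try lra. c2.
      + apply (C2_exR T L (fun t x => p3 (u t x) * (- (sigma ^ 2 / 2) * pxx u t x + r * u t x - Gc eps L u m t x ^ 2))); try lra.
        assert (C2 T L (fun t x => Gc eps L u m t x ^ 2)).
        { apply C2_ext with (fun t x => Gc eps L u m t x * Gc eps L u m t x); try lra. intros; ring. c2. }
        c2.
      + intros x Hx. unfold D3.
        pose proof (p2_ge0 (u t x)). pose proof (p3_le0 (u t x)). pose proof (p3_s (u t x)).
        assert (0 <= Gc eps L u m t x ^ 2) by apply pow2_ge_0.
        assert (0 <= sigma ^ 2) by apply pow2_ge_0.
        assert (0 <= px u t x * px u t x) by nra.
        assert (0 <= sigma ^ 2 * (p2 (u t x) * (px u t x * px u t x))) by (apply Rmult_le_pos; [|apply Rmult_le_pos]; auto).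
        assert (0 <= r * (p3 (u t x) * u t x)) by (apply Rmult_le_pos; lra).
        assert (0 <= - p3 (u t x) * Gc eps L u m t x ^ 2) by (apply Rmult_le_pos; lra).
        nra. }
  assert (ZT : Ic T L fu T = 0).
  { rewrite Ic_eq by lra. apply RInt_zero. lra. intros x Hx. unfold fu. apply p4_pos.
    rewrite (proj2 (Hin x ltac:(split; lra))). apply HuT; lra. }
  assert (Mon : forall t, 0 <= t <= T -> Ic T L fu t <= 0).
  { intros t Ht. rewrite <- ZT. apply mono; try lra.
    - intros s _. apply Ic_cont; [lra|auto].
    - intros s Hs'. exists (RInt (pt fu s) 0 L). split.
      + apply (Ic_derive T L fu s); try lra; auto.
        * apply C2_ext with (fun t x => p3 (u t x) * pt u t x); try lra. 2: c2.
          intros a b Ha Hb. symmetry. apply is_derive_unique. apply Dfu; auto.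
        * intros a b Ha Hb. eexists. apply Dfu; auto.
      + apply Key. lra. }
  intros t x Ht Hx.
  assert (Z : forall y, 0 <= y <= L -> fu (cl 0 T t) (cl 0 L y) = 0).
  { apply (zero_int (fun y => fu (cl 0 T t) (cl 0 L y)) 0 L); try lra.
    - intros y. apply C2_slice. auto.
    - intros y _. apply p4_ge0.
    - apply Mon. auto. }
  specialize (Z x Hx). rewrite !cl_id in Z by lra. apply p4_zero. exact Z.
Qed.


Lemma cont_comb (f g : R -> R) a b' c x : continuous f x -> continuous g x ->
  continuous (fun s => a * f s - b' * g s + c * s) x.
Proof.
  intros Hf Hg.
  apply (continuous_plus (K:=R_AbsRing) (V:=R_NormedModule) (fun s => a * f s - b' * g s) (fun s => c * s)).
  apply (continuous_minus (K:=R_AbsRing) (V:=R_NormedModule) (fun s => a * f s) (fun s => b' * g s)).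
  apply (continuous_mult (K:=R_AbsRing) (fun _ => a) f); auto. apply continuous_const.
  apply (continuous_mult (K:=R_AbsRing) (fun _ => b') g); auto. apply continuous_const.
  apply (continuous_mult (K:=R_AbsRing) (fun _ => c) (fun s => s)). apply continuous_const. apply continuous_id.
Qed.

Lemma energy L T sigma r eps uT m0 u m U : 0 < L -> 0 < T -> 0 < sigma -> 0 < r -> 0 < eps ->
  mfg_solution L T sigma r eps uT m0 u m ->
  (forall t x, 0 <= t <= T -> 0 <= x <= L -> 0 <= m t x) ->
  (forall t x, 0 <= t <= T -> 0 <= x <= L -> 0 <= u t x) ->
  (forall t, 0 <= t <= T -> RInt (m t) 0 L = 1) ->
  (forall x, 0 <= x <= L -> uT x <= U) ->
  RInt (fun t => RInt (fun x => m t x * (px u t x) ^ 2) 0 L) 0 T <= 4 * U / b_of eps + T.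
Proof.
  intros HL HT Hsig Hr Heps Hs Hmp Hup Hmass HU.
  pose proof (FP L T sigma r eps uT m0 u m HL HT Hs) as HFP. unpack Hs T L u m.
  assert (CG := C2_G T L eps u m ltac:(lra) ltac:(lra) Cux Cm0).
  assert (CdF : C2 T L (dFl sigma eps L u m)) by (unfold dFl; c2).
  assert (CF : C2 T L (Fl sigma eps L u m)) by (unfold Fl; c2).
  assert (CA := C2_A T L u m ltac:(lra) ltac:(lra) Cux Cm0).
  set (b := b_of eps). set (c := c_of eps).
  assert (Hb : 0 < b) by (unfold b, b_of; apply Rdiv_lt_0_compat; lra).
  assert (Hc : 0 < c) by (unfold c, c_of; apply Rdiv_lt_0_compat; lra).
  assert (Hbc : b + c = 1) by (unfold b, c, b_of, c_of; field; lra).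
  set (fI := fun t x => m t x * px u t x ^ 2).
  assert (CfI : C2 T L fI).
  { apply C2_ext with (fun t x => m t x * (px u t x * px u t x)); try lra. intros; unfold fI; ring. c2. }
  set (fE := fun t x => u t x * m t x).
  assert (CfE : C2 T L fE) by (unfold fE; c2).
  assert (DfE : forall t x, 0 <= t <= T -> 0 <= x <= L -> is_derive (fun s => fE s x) t (pt u t x * m t x + u t x * pt m t x)).
  { intros t x Ht Hx. unfold fE. eapply is_derive_eq.
    apply (is_derive_mult (fun s => u s x) (fun s => m s x)).
    apply Derive_correct. exact (proj1 (Du t x Ht Hx)).
    apply Derive_correct. exact (proj1 (Dm t x Ht Hx)). intros; apply Rmult_comm.
    unfold plus, mult; simpl. unfold pt. ring. }
  assert (CpfE : C2 T L (pt fE)).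
  { apply C2_ext with (fun t x => pt u t x * m t x + u t x * pt m t x); try lra. 2: c2.
    intros t x Ht Hx. symmetry. apply is_derive_unique. apply DfE; auto. }
  set (D4 := fun t x => px u t x * Fl sigma eps L u m t x + u t x * dFl sigma eps L u m t x
                        - sigma ^ 2 / 2 * (pxx u t x * m t x + px u t x * px m t x)).
  assert (CD4 : C2 T L D4) by (unfold D4; c2).
  assert (Key : forall t, 0 < t < T -> b * Ic T L fI t - b <= 4 * RInt (pt fE t) 0 L).
  { intros t Ht.
    set (A := Aint L u m t). set (B := b + c * A).
    assert (HG : forall x, Gc eps L u m t x = /2 * (B - px u t x)) by (intros; unfold B; reflexivity).
    assert (E2 : RInt (D4 t) 0 L = 0).
    { assert (HD : forall x, 0 <= x <= L -> is_derive (fun y => u t y * Fl sigma eps L u m t y - sigma ^ 2 / 2 * (px u t y * m t y)) x (D4 t x)).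
      { intros x Hx. destruct (Du t x ltac:(lra) Hx) as [_ [E2 E3]].
        destruct (Dm t x ltac:(lra) Hx) as [_ [F2 F3]].
        unfold D4. eapply is_derive_eq.
        apply (is_derive_minus (fun y => u t y * Fl sigma eps L u m t y) (fun y => sigma ^ 2 / 2 * (px u t y * m t y))).
        apply (is_derive_mult (fun y => u t y) (fun y => Fl sigma eps L u m t y)).
        apply Derive_correct; auto. apply Fl_dx; auto. intros; apply Rmult_comm.
        apply is_derive_scal. apply (is_derive_mult (fun y => px u t y) (fun y => m t y)).
        apply Derive_correct; auto. apply Derive_correct; auto. intros; apply Rmult_comm.
        unfold minus, plus, opp, mult; simpl. unfold pxx, px. ring. }
      rewrite (ftc_slice T L D4 (fun y => u t y * Fl sigma eps L u m t y - sigma ^ 2 / 2 * (px u t y * m t y)) t); try lra; try exact HD; try assumption.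
      pose proof (Hrob t 0 ltac:(split; lra) ltac:(left; reflexivity)) as R0.
      pose proof (Hrob t L ltac:(split; lra) ltac:(right; reflexivity)) as R1.
      destruct (Hneu t ltac:(split; lra)) as [N0 N1].
      unfold Fl. rewrite R0, R1, N0, N1, !Rmult_0_r, !Rmult_0_l. Show.
      apply Rminus_diag_eq. reflexivity. }
    assert (ExI : ex_RInt (fI t) 0 L) by (apply (C2_exR T L fI); try lra; auto).
    assert (ExM : ex_RInt (m t) 0 L) by (apply (C2_exR T L m); try lra; auto).
    assert (ExD : ex_RInt (D4 t) 0 L) by (apply (C2_exR T L D4); try lra; auto).
    assert (ExUM : ex_RInt (fun x => px u t x * m t x) 0 L) by (apply (C2_exR T L (fun t x => px u t x * m t x)); try lra; c2).
    assert (Low : /4 * RInt (fI t) 0 L - /4 * B ^ 2 <= RInt (pt fE t) 0 L).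
    { apply Rle_trans with (RInt (fun x => /4 * fI t x + ((- /4 * B ^ 2) * m t x + D4 t x)) 0 L).
      - assert (X1 : ex_RInt (fun x => /4 * fI t x) 0 L) by (apply (C2_exR T L (fun t x => /4 * fI t x)); try lra; c2).
        assert (X2 : ex_RInt (fun x => (- /4 * B ^ 2) * m t x) 0 L) by (apply (C2_exR T L (fun t x => (- /4 * (b + c * Aint L u m t) ^ 2) * m t x)); try lra; c2).
        assert (X3 : ex_RInt (fun x => (- /4 * B ^ 2) * m t x + D4 t x) 0 L) by (apply (C2_exR T L (fun t x => (- /4 * (b + c * Aint L u m t) ^ 2) * m t x + D4 t x)); try lra; c2).
        rewrite (RInt_add (fun x => /4 * fI t x) (fun x => (- /4 * B ^ 2) * m t x + D4 t x)); [|exact X1|exact X3].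
        rewrite (RInt_add (fun x => (- /4 * B ^ 2) * m t x) (D4 t)); [|exact X2|exact ExD].
        rewrite (RInt_sc (fI t)); [|exact ExI].
        rewrite (RInt_sc (m t)); [|exact ExM].
        rewrite E2, (Hmass t) by lra. lra.
      - apply RInt_le. lra.
        + apply (C2_exR T L (fun t x => /4 * fI t x + ((- /4 * (b + c * Aint L u m t) ^ 2) * m t x + D4 t x))); try lra. c2.
        + apply (C2_exR T L (pt fE)); try lra. auto.
        + intros x Hx. replace (pt fE t x) with (pt u t x * m t x + u t x * pt m t x)
            by (symmetry; apply is_derive_unique; apply DfE; lra).
          specialize (Eu t x Ht Hx). rewrite HFP by lra.
          assert (0 <= r * (u t x * m t x)) by (apply Rmult_le_pos; [lra|apply Rmult_le_pos; [apply Hup|apply Hmp]; lra]).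
          assert (Ept : pt u t x = - (sigma ^ 2 / 2) * pxx u t x + r * u t x - Gc eps L u m t x ^ 2) by lra.
          rewrite Ept. unfold D4, fI, dFl, Fl. rewrite !HG.
          nra. }
    assert (CS : A ^ 2 <= RInt (fI t) 0 L).
    { assert (HCS : 0 <= RInt (fun x => fI t x + ((-2 * A) * (px u t x * m t x) + A ^ 2 * m t x)) 0 L).
      { apply RInt_ge_0. lra.
        apply (C2_exR T L (fun t x => fI t x + ((-2 * Aint L u m t) * (px u t x * m t x) + Aint L u m t ^ 2 * m t x))); try lra. c2.
        intros x Hx. unfold fI.
        replace (m t x * px u t x ^ 2 + (-2 * A * (px u t x * m t x) + A ^ 2 * m t x)) with (m t x * (px u t x - A) ^ 2) by ring.
        apply Rmult_le_pos. apply Hmp; lra. apply pow2_ge_0. }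
      assert (Y1 : ex_RInt (fun x => (-2 * A) * (px u t x * m t x)) 0 L) by (apply (C2_exR T L (fun t x => (-2 * Aint L u m t) * (px u t x * m t x))); try lra; c2).
      assert (Y2 : ex_RInt (fun x => A ^ 2 * m t x) 0 L) by (apply (C2_exR T L (fun t x => Aint L u m t ^ 2 * m t x)); try lra; c2).
      assert (Y3 : ex_RInt (fun x => (-2 * A) * (px u t x * m t x) + A ^ 2 * m t x) 0 L) by (apply (C2_exR T L (fun t x => (-2 * Aint L u m t) * (px u t x * m t x) + Aint L u m t ^ 2 * m t x)); try lra; c2).
      rewrite (RInt_add (fI t) (fun x => (-2 * A) * (px u t x * m t x) + A ^ 2 * m t x)) in HCS; [|exact ExI|exact Y3].
      rewrite (RInt_add (fun x => (-2 * A) * (px u t x * m t x)) (fun x => A ^ 2 * m t x)) in HCS; [|exact Y1|exact Y2].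
      rewrite (RInt_sc (fun x => px u t x * m t x)) in HCS; [|exact ExUM].
      rewrite (RInt_sc (m t)) in HCS; [|exact ExM].
      rewrite (Hmass t) in HCS by lra.
      fold (Aint L u m t) in HCS. fold A in HCS. nra. }
    rewrite Ic_eq by lra.
    assert (B ^ 2 <= c * A ^ 2 + b).
    { unfold B. assert (c * A ^ 2 + b - (b + c * A) ^ 2 = b * c * (A - 1) ^ 2).
      { replace b with (1 - c) by lra. ring. }
      assert (0 <= b * c * (A - 1) ^ 2) by (apply Rmult_le_pos; [nra|apply pow2_ge_0]). lra. }
    nra. }
  set (J := fun t => RInt (Ic T L fI) 0 t).
  assert (DJ : forall t, is_derive J t (Ic T L fI t)).
  { intros t. apply (is_derive_RInt (Ic T L fI) J 0 t).
    - apply filter_forall. intros y. apply (RInt_correct (V:=R_CompleteNormedModule)). apply exRc.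
      intros; apply Ic_cont; [lra|auto].
    - apply Ic_cont; [lra|auto]. }
  assert (Mon : 4 * Ic T L fE 0 - b * J 0 + b * 0 <= 4 * Ic T L fE T - b * J T + b * T).
  { apply (mono (fun s => 4 * Ic T L fE s - b * J s + b * s)); try lra.
    - intros s _. apply cont_comb. apply Ic_cont; [lra|auto].
      apply (ex_derive_continuous (K:=R_AbsRing) (V:=R_NormedModule)). eexists; apply DJ.
    - intros s Hs'. exists (4 * RInt (pt fE s) 0 L - b * Ic T L fI s + b * 1). split.
      + apply (is_derive_plus (fun s => 4 * Ic T L fE s - b * J s) (fun s => b * s)).
        apply (is_derive_minus (fun s => 4 * Ic T L fE s) (fun s => b * J s)).
        apply is_derive_scal. apply (Ic_derive T L fE s); try lra; auto.
        intros a x Ha Hx. eexists. apply DfE; auto.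
        apply is_derive_scal, DJ. apply is_derive_scal. apply (is_derive_id (K:=R_AbsRing)).
      + specialize (Key s ltac:(lra)). lra. }
  assert (J0 : J 0 = 0) by (unfold J; rewrite RInt_point; reflexivity).
  assert (E0 : 0 <= Ic T L fE 0).
  { rewrite Ic_eq by lra. apply RInt_ge_0. lra. apply (C2_exR T L fE); try lra; auto.
    intros x Hx. unfold fE. apply Rmult_le_pos; [apply Hup|apply Hmp]; lra. }
  assert (ET : Ic T L fE T <= U).
  { rewrite Ic_eq by lra. rewrite <- (Rmult_1_r U). rewrite <- (Hmass T) by lra.
    rewrite <- RInt_sc by (apply (C2_exR T L m); try lra; auto).
    apply RInt_le. lra. apply (C2_exR T L fE); try lra; auto.
    apply (C2_exR T L (fun t x => U * m t x)); try lra. c2.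
    intros x Hx. unfold fE. rewrite (proj2 (Hin x ltac:(split; lra))).
    apply Rmult_le_compat_r. apply Hmp; lra. apply HU; lra. }
  assert (HJ : J T <= 4 * U / b + T).
  { apply Rmult_le_reg_l with b. lra.
    replace (b * (4 * U / b + T)) with (4 * U + b * T) by (field; lra).
    rewrite J0 in Mon. clear -Mon E0 ET Hb. nra. }
  eapply Rle_trans; [|exact HJ]. right. unfold J. apply RInt_ext.
  intros t Ht. rewrite Rmin_left, Rmax_right in Ht by lra. rewrite Ic_eq by lra. reflexivity.
Qed.


Theorem proposition2p1 :
  forall (L T sigma r eps : R) (uT m0 : R -> R),
    0 < L -> 0 < T -> 0 < sigma -> 0 < r -> 0 < eps ->
    (exists gamma : R, 0 < gamma /\ C2gamma L gamma uT /\ C2gamma L gamma m0) ->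
    Derive uT 0 = 0 -> Derive uT L = 0 ->
    m0 0 = 0 -> Derive m0 0 = 0 -> m0 L = 0 -> Derive m0 L = 0 ->
    prob_density L m0 ->
    (forall x, in_cc 0 L x -> 0 <= uT x) ->
    exists C : R, 0 < C /\
      forall u m : R -> R -> R,
        mfg_solution L T sigma r eps uT m0 u m ->
        (forall t, in_cc 0 T t -> prob_density L (m t)) /\
        (forall t x, in_cc 0 T t -> in_cc 0 L x -> 0 <= u t x) /\
        RInt (fun t => RInt (fun x => m t x * (px u t x) ^ 2) 0 L) 0 T <= C.
Proof.
  intros L T sigma r eps uT m0 HL HT Hsig Hr Heps [gamma [Hg [HuT Hm0]]] _ _ _ _ _ _ Hpd HuTp.
  destruct (continuity_ab_maj uT 0 L) as [Mx [HMx HMxin]]. lra.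
  { intros x Hx. apply continuity_pt_filterlim.
    apply (ex_derive_continuous (K:=R_AbsRing) (V:=R_NormedModule)).
    exact (proj1 (proj1 HuT x Hx)). }
  set (U := uT Mx).
  assert (HU0 : 0 <= U) by (apply HuTp; exact HMxin).
  assert (Hb : 0 < b_of eps) by (unfold b_of; apply Rdiv_lt_0_compat; lra).
  assert (HUb : 0 <= 4 * U / b_of eps) by (apply Rmult_le_pos; [lra|left; apply Rinv_0_lt_compat; lra]).
  exists (4 * U / b_of eps + T + 1). split. lra.
  intros u m Hs.
  assert (Hmn := m_nonneg L T sigma r eps uT m0 u m HL HT Hsig Hs (proj1 Hpd)).
  assert (Hun := u_nonneg L T sigma r eps uT m0 u m HL HT Hsig Hr Hs HuTp).
  assert (Hms := mass L T sigma r eps uT m0 u m HL HT Hs (proj2 Hpd)).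
  split; [|split].
  - intros t Ht. split.
    + intros x Hx. apply Hmn; assumption.
    + apply Hms; assumption.
  - intros t x Ht Hx. apply Hun; assumption.
  - assert (E := energy L T sigma r eps uT m0 u m U HL HT Hsig Hr Heps Hs Hmn Hun Hms
             (fun x Hx => HMx x Hx)).
    lra.
Qed.
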